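(* Let $k,x_T,k_{\mathrm{on}},k_{\mathrm{off}}>0$ be constants, let $f_1,\ldots,f_n$ be functions of $(x_1,\ldots,x_n)$, and consider the system $$\dot I = k_{\mathrm{off}}x_1 - k_{\mathrm{on}} I - \lambda(C,x_1,I),\qquad \dot x_1 = f_1(x_1,\ldots,x_n) - k_{\mathrm{off}}x_1 + k_{\mathrm{on}} I + \lambda(C,x_1,I),\qquad \dot x_i = f_i(x_1,\ldots,x_n)\ (i=2,\ldots,n),$$ with the conservation law $x_1+I=x_T$, where $\dot C=h(C)$ with $C\ge 0$, and either $\lambda(C,x_1,I)=kIC$ (activation) or $\lambda(C,x_1,I)=-kx_1C$ (inhibition). Eliminating the variable $I$ yields the system $\dot{\mathbf x} = \mathbf f(\mathbf x)+\hat{\mathbf e}_1 g(u,x_1)$ with $u=kC$, where $g(u,x_1)=(u+k_{\mathrm{on}})(x_T-x_1)-k_{\mathrm{off}}x_1$ in the activation case and $g(u,x_1)=k_{\mathrm{on}}(x_T-x_1)-(u+k_{\mathrm{off}})x_1$ in the inhibition case. Moreover, the interval $[0,x_T]$ is forward-invariant for $x_1$, and at any steady state $x_1\neq 0$ and $x_1\neq x_T$.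
   Context: $\mathbf f=(f_1,\ldots,f_n)^\top$ and $\hat{\mathbf e}_1$ is the first standard basis vector of $\mathbb R^n$. $I$ is interpreted as the concentration of the inactive form of species $X_1$ and $C$ as the concentration of an external species. *)

(* Defs.v *)
(* concrete reals R, Coquelicot derivatives; mathcomp ordinals
   'I_n.+1 index the species x_1..x_{n+1} (x_1 = ord0). *)
From Stdlib Require Import Reals.
From Coquelicot Require Import Coquelicot.
From mathcomp Require Import ssreflect ssrfun ssrbool eqtype ssrnat fintype.
Open Scope R_scope.

Inductive regulation := Activation | Inhibition.

Definition lam (m : regulation) (k C x1 I : R) : R :=
  match m with
  | Activation => k * I * C
  | Inhibition => - (k * x1 * C)
  end.

Definition gfun (m : regulation) (kon koff xT u x1 : R) : R :=
  match m with
  | Activation => (u + kon) * (xT - x1) - koff * x1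
  | Inhibition => kon * (xT - x1) - (u + koff) * x1
  end.

Definition e1 {n : nat} (i : 'I_n.+1) : R := if i == ord0 then 1 else 0.

Definition rhs_x (m : regulation) {n : nat} (k kon koff : R)
  (f : ('I_n.+1 -> R) -> 'I_n.+1 -> R) (C : R) (x : 'I_n.+1 -> R) (I : R)
  (i : 'I_n.+1) : R :=
  if i == ord0 then f x i - koff * x ord0 + kon * I + lam m k C (x ord0) I
  else f x i.

Definition rhs_I (m : regulation) (k kon koff C x1 I : R) : R :=
  koff * x1 - kon * I - lam m k C x1 I.

Definition full_solution (m : regulation) {n : nat} (k xT kon koff : R)
  (h : R -> R) (f : ('I_n.+1 -> R) -> 'I_n.+1 -> R)
  (C I : R -> R) (x : R -> 'I_n.+1 -> R) : Prop :=
  forall t, 0 <= t ->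
    is_derive C t (h (C t)) /\
    is_derive I t (rhs_I m k kon koff (C t) (x t ord0) (I t)) /\
    (forall i, is_derive (fun s => x s i) t
                 (rhs_x m k kon koff f (C t) (x t) (I t) i)) /\
    0 <= C t /\
    x t ord0 + I t = xT.

(* Main.v *)
From Stdlib Require Import Reals Lra.
From Coquelicot Require Import Coquelicot.
Open Scope R_scope.

Lemma cont_of (F : R -> R) s l : derivable_pt_lim F s l ->
  forall eps, 0 < eps -> exists d, 0 < d /\ forall y, Rabs (y - s) < d -> Rabs (F y - F s) < eps.
Proof.
  intros Hd eps He.
  assert (Hc : continuity_pt F s) by (apply derivable_continuous_pt; exists l; exact Hd).
  destruct (Hc eps He) as [d [Hd0 Hy]].
  exists d; split; [lra|]. intros y Hys.
  destruct (Req_dec y s) as [->|Hne].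
  - rewrite Rminus_diag, Rabs_R0; lra.
  - apply (Hy y). split. split; [exact I| congruence]. exact Hys.
Qed.

Lemma upper_inv (F F' : R -> R) b :
  (forall t, 0 <= t -> derivable_pt_lim F t (F' t)) -> F 0 <= b ->
  (forall t, 0 <= t -> F t = b -> F' t < 0) -> forall t, 0 <= t -> F t <= b.
Proof.
  intros HD H0 Hb t Ht.
  destruct (Rle_or_lt (F t) b) as [|Hgt]; [assumption|exfalso].
  set (A := fun u => 0 <= u <= t /\ F u <= b).
  destruct (completeness A) as [s [Hub Hlub]].
  { exists t. intros u [[_ Hu] _]. exact Hu. }
  { exists 0. split; [lra|assumption]. }
  assert (Hs0 : 0 <= s) by (apply Hub; split; [lra|assumption]).
  assert (Hst : s <= t) by (apply Hlub; intros u [[_ Hu] _]; exact Hu).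
  assert (HFs : F s <= b).
  { destruct (Rle_or_lt (F s) b) as [|Hlt]; [assumption|exfalso].
    destruct (cont_of F s (F' s) (HD s Hs0) (F s - b)) as [d [Hd Hy]]; [lra|].
    assert (s <= s - d); [|lra].
    apply Hlub. intros u [[Hu0 Hu1] Hu].
    destruct (Rle_or_lt u (s - d)) as [|Hlt2]; [assumption|exfalso].
    assert (u <= s) by (apply Hub; split; [lra|assumption]).
    specialize (Hy u).
    assert (Hr : Rabs (F u - F s) < F s - b) by (apply Hy; rewrite Rabs_left1; lra).
    apply Rabs_def2 in Hr. lra. }
  assert (Hst' : s < t) by (destruct Hst as [|<-]; lra).
  assert (Hex : exists h, 0 < h /\ s + h <= t /\ F (s + h) <= b).
  { destruct HFs as [Hlt|Heq].
    - destruct (cont_of F s (F' s) (HD s Hs0) (b - F s)) as [d [Hd Hy]]; [lra|].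
      set (h := Rmin (d/2) (t - s)).
      assert (0 < h) by (unfold h; apply Rmin_pos; lra).
      assert (h <= d/2) by apply Rmin_l. assert (h <= t - s) by apply Rmin_r.
      exists h. split; [lra|split; [lra|]].
      assert (Hr : Rabs (F (s + h) - F s) < b - F s) by (apply Hy; rewrite Rabs_right; lra).
      apply Rabs_def2 in Hr. lra.
    - assert (Hl : F' s < 0) by (apply Hb; assumption).
      destruct (HD s Hs0 (- F' s / 2)) as [d Hd]; [lra|].
      pose proof (cond_pos d) as Hdp.
      set (h := Rmin (d/2) (t - s)).
      assert (0 < h) by (unfold h; apply Rmin_pos; lra).
      assert (h <= d/2) by apply Rmin_l. assert (h <= t - s) by apply Rmin_r.
      exists h. split; [lra|split; [lra|]].
      assert (Hr : Rabs ((F (s + h) - F s) / h - F' s) < - F' s / 2).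
      { apply Hd; [lra| rewrite Rabs_right; lra]. }
      apply Rabs_def2 in Hr. destruct Hr as [Hr _].
      assert (Hq : (F (s + h) - F s) / h < 0) by lra.
      assert (F (s + h) - F s < 0); [|lra].
      replace (F (s + h) - F s) with ((F (s + h) - F s) / h * h) by (field; lra).
      nra. }
  destruct Hex as [h [Hh [Hht Hhb]]].
  assert (s + h <= s) by (apply Hub; split; [lra|assumption]). lra.
Qed.

Require Import Defs.
From mathcomp Require Import ssreflect ssrfun ssrbool eqtype ssrnat fintype.
Open Scope R_scope.
Theorem lemma6 (m : regulation) (n : nat) (k xT kon koff : R)
  (hk : 0 < k) (hxT : 0 < xT) (hkon : 0 < kon) (hkoff : 0 < koff)
  (f : ('I_n.+1 -> R) -> 'I_n.+1 -> R) (h : R -> R) :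
  (* eliminating I gives xdot = f(x) + e1 g(u, x1) with u = k C *)
  (forall (C I : R -> R) (x : R -> 'I_n.+1 -> R),
     full_solution m k xT kon koff h f C I x ->
     forall t, 0 <= t -> forall i,
       is_derive (fun s => x s i) t
         (f (x t) i + e1 i * gfun m kon koff xT (k * C t) (x t ord0))) /\
  (* [0, xT] is forward invariant for x1 *)
  (forall (C I : R -> R) (x : R -> 'I_n.+1 -> R),
     full_solution m k xT kon koff h f C I x ->
     0 <= x 0 ord0 <= xT ->
     forall t, 0 <= t -> 0 <= x t ord0 <= xT) /\
  (* at any steady state, x1 <> 0 and x1 <> xT *)
  (forall (C I : R) (x : 'I_n.+1 -> R),
     0 <= C -> h C = 0 -> x ord0 + I = xT ->
     rhs_I m k kon koff C (x ord0) I = 0 ->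
     (forall i, rhs_x m k kon koff f C x I i = 0) ->
     x ord0 <> 0 /\ x ord0 <> xT).
Proof.
split; [|split].
- move=> C I x Hs t Ht i.
  have [_ [_ [Hx [_ Hc]]]] := Hs t Ht.
  have := Hx i. rewrite /rhs_x /e1.
  case: (i == ord0) => Hd.
  + have -> : f (x t) i + 1 * gfun m kon koff xT (k * C t) (x t ord0) =
      f (x t) i - koff * x t ord0 + kon * I t + lam m k (C t) (x t ord0) (I t).
    { rewrite -Hc; destruct m; rewrite /=; ring. }
    exact Hd.
  + by rewrite Rmult_0_l Rplus_0_r.
- move=> C I x Hs H0 t Ht.
  have HD : forall t, 0 <= t -> derivable_pt_lim I t (rhs_I m k kon koff (C t) (x t ord0) (I t)).
  { move=> u Hu. apply/is_derive_Reals. by have [_ [? _]] := Hs u Hu. }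
  have Hc : forall u, 0 <= u -> x u ord0 + I u = xT by move=> u Hu; have [_ [_ [_ [_ ?]]]] := Hs u Hu.
  have HC : forall u, 0 <= u -> 0 <= C u by move=> u Hu; have [_ [_ [_ [? _]]]] := Hs u Hu.
  have Hup : I t <= xT.
  { apply: (upper_inv I (fun u => rhs_I m k kon koff (C u) (x u ord0) (I u)) xT HD) => //.
    - have := Hc 0 (Rle_refl 0). nra.
    - move=> u Hu HI. have := Hc u Hu. have := HC u Hu. rewrite /rhs_I HI.
      destruct m; rewrite /= => ? ?; have -> : x u ord0 = 0 by nra.
      + have : 0 <= k * xT * C u by apply: Rmult_le_pos; [nra|]. nra.
      + nra. }
  have Hlo : - I t <= 0.
  { apply: (upper_inv (fun u => - I u) (fun u => - rhs_I m k kon koff (C u) (x u ord0) (I u)) 0) => //.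
    - move=> u Hu. apply: derivable_pt_lim_opp. exact: HD.
    - have := Hc 0 (Rle_refl 0). nra.
    - move=> u Hu HI. have := Hc u Hu. have := HC u Hu. rewrite /rhs_I.
      have HI0 : I u = 0 by nra. rewrite HI0.
      destruct m; rewrite /= => ? ?; have -> : x u ord0 = xT by nra.
      + nra.
      + have : 0 <= k * xT * C u by apply: Rmult_le_pos; [nra|]. nra. }
  have := Hc t Ht. nra.
- move=> C I x HC _ Hc HI _. rewrite /rhs_I in HI.
  have Hp : 0 <= k * xT * C by apply: Rmult_le_pos; [nra|].
  case: m HI => /= HI; split => Hx; rewrite Hx in HI Hc; nra.
Qed.
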